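(* Let $G=(V,E)$ be an undirected graph (finite or infinite) and $M=M(S)$ a multiplex of $G$ generated by the simplex $S=(V_S,E_S)$. Then: (i) $G(\widetilde M)$ has a partition $F_M\neq\{\widetilde M\}$ of $\widetilde M$ into maximal ``strong'' partitive sets of $G(\widetilde M)$; (ii) if $\mathrm{rank}(M)=1$, then either $G(\widetilde M)/F_M$ is isomorphic to $S$, or $G(\widetilde M)/F_M$ is indecomposable and isomorphic to a sub-graph $G'=(V',E')$ of $G(\widetilde M)$ with $E'\subseteq M$; (iii) if $\mathrm{rank}(M)\ge 2$, then $G(\widetilde M)/F_M$ is isomorphic to $S$.
   Context: A graph $G=(V,E)$ has vertex set $V$ (possibly infinite) and edge set $E\subseteq V^2$ of ordered pairs; it is undirected if $E$ is irreflexive and symmetric, and then $ab$ denotes $\{(a,b),(b,a)\}$, with $ab\in E$ meaning $(a,b)\in E$. For $X\subseteq V$, $E(X)=\{(a,b)\in E: a,b\in X\}$ and $G(X)=(X,E(X))$. For a set $A$ of ordered pairs, $\widetilde A$ is the set of vertices $a$ such that $(a,b)\in A$ or $(b,a)\in A$ for some $b$. A set $X\subseteq W$ is a partitive set of a graph $H=(W,D)$ if for all $a,b\in X$ and $c\in W\setminus X$: $(a,c)\in D\Leftrightarrow(b,c)\in D$ and $(c,a)\in D\Leftrightarrow(c,b)\in D$; $I(H)$ is the class of partitive sets; a partitive set is trivial if it is a singleton or $W$; $H$ is indecomposable if all its partitive sets are trivial. A ``strong'' partitive set of $H$ is an $X\in I(H)$ such that for every $Y\in I(H)$ with $X\cap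 Y\neq\emptyset$, $X\subseteq Y$ or $Y\subseteq X$; $I_F(H)$ is the class of these. A maximal ``strong'' partitive set of $H$ is an element of $I_F(H)\setminus\{W\}$ maximal for inclusion in $I_F(H)\setminus\{W\}$. For a partition $P$ of $W$ into partitive sets, the quotient $H/P$ is the graph with vertex set $P$ in which distinct $X,Y$ are joined iff $(x,y)\in D$ for some, equivalently every, $x\in X,y\in Y$ (isomorphic to $H(f(P))$ for any choice function $f$ with $f(X)\in X$). Implication classes of undirected $G$: on $E$ define $(a,b)\Gamma(a',b')$ iff either $a=a'$ and $(b,b')\notin E$, or $b=b'$ and $(a,a')\notin E$; the classes of the transitive closure $\Gamma^*$ are the implication classes. For an implication class $A$, $A^{-1}=\{(b,a):(a,b)\in A\}$ and the color class (color) is $\widehat A=A\cup A^{-1}$. A simplex of rank $r\ge1$ is a complete sub-graph $S=(V_S,E_S)$ of $G$ on $r+1$ vertices whose distinct undirected edges lie in distinct color classes. The multiplex generated by $S$ is $M(S)=\bigcup\{\widehat A:\widehat A\text{ a color class},\ \widehat A\cap E_S\neq\emptyset\}$, of rank $r$; $\widetilde M$ is the set of vertices spanned by $M$. *)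

(* Defs.v *)
From Stdlib Require Import List Relations.
Import ListNotations.
Set Implicit Arguments.

Section Defs.

Definition partitive (W : Type) (D : W -> W -> Prop) (X : W -> Prop) : Prop :=
  forall a b c, X a -> X b -> ~ X c ->
    (D a c <-> D b c) /\ (D c a <-> D c b).

Definition strong_partitive (W : Type) (D : W -> W -> Prop) (X : W -> Prop) : Prop :=
  partitive D X /\
  forall Y, partitive D Y -> (exists z, X z /\ Y z) ->
    (forall w, X w -> Y w) \/ (forall w, Y w -> X w).

Definition max_strong_partitive (W : Type) (D : W -> W -> Prop) (X : W -> Prop) : Prop :=
  strong_partitive D X /\ ~ (forall w, X w) /\
  forall Y, strong_partitive D Y -> ~ (forall w, Y w) ->
    (forall w, X w -> Y w) -> (forall w, Y w -> X w).

Definition is_partition (W : Type) (F : (W -> Prop) -> Prop) : Prop :=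
  (forall X, F X -> exists w, X w) /\
  (forall X Y, F X -> F Y -> X <> Y -> forall w, X w -> Y w -> False) /\
  (forall w, exists X, F X /\ X w).

Definition quot_vertex (W : Type) (F : (W -> Prop) -> Prop) : Type :=
  { X : W -> Prop | F X }.

Definition quot_edge (W : Type) (D : W -> W -> Prop) (F : (W -> Prop) -> Prop)
  (X Y : quot_vertex F) : Prop :=
  X <> Y /\ exists x y, proj1_sig X x /\ proj1_sig Y y /\ D x y.

Definition indecomposable (W : Type) (D : W -> W -> Prop) : Prop :=
  forall X, partitive D X ->
    (forall w, ~ X w) \/ (exists w, forall y, X y <-> y = w) \/ (forall w, X w).

Definition graph_iso (A : Type) (RA : A -> A -> Prop) (B : Type) (RB : B -> B -> Prop)
  : Prop :=
  exists (f : A -> B) (g : B -> A),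
    (forall a, g (f a) = a) /\ (forall b, f (g b) = b) /\
    (forall a a', RA a a' <-> RB (f a) (f a')).

Variable V : Type.
Variable E : V -> V -> Prop.

Definition edgeP (p : V * V) : Prop := E (fst p) (snd p).

Definition swap (p : V * V) : V * V := (snd p, fst p).

Definition Gamma (p q : V * V) : Prop :=
  edgeP p /\ edgeP q /\
  ((fst p = fst q /\ ~ E (snd p) (snd q)) \/
   (snd p = snd q /\ ~ E (fst p) (fst q))).

Definition impl_class (A : V * V -> Prop) : Prop :=
  exists e, edgeP e /\
    forall p, A p <-> (edgeP p /\ clos_refl_trans (V * V) Gamma e p).

Definition color_class (C : V * V -> Prop) : Prop :=
  exists A, impl_class A /\ forall p, C p <-> (A p \/ A (swap p)).

(* simplex of rank r with vertex list VS (edge set E_S = all pairs of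
   distinct vertices of VS, since S is complete) *)
Definition simplex (VS : list V) (r : nat) : Prop :=
  1 <= r /\ NoDup VS /\ length VS = S r /\
  (forall a b, In a VS -> In b VS -> a <> b -> E a b) /\
  (forall a b c d, In a VS -> In b VS -> In c VS -> In d VS ->
     a <> b -> c <> d -> ~ ((a = c /\ b = d) \/ (a = d /\ b = c)) ->
     forall C, color_class C -> ~ (C (a, b) /\ C (c, d))).

Definition simplex_edge (VS : list V) (p : V * V) : Prop :=
  In (fst p) VS /\ In (snd p) VS /\ fst p <> snd p.

Definition multiplex (VS : list V) (p : V * V) : Prop :=
  exists C, color_class C /\ (exists q, simplex_edge VS q /\ C q) /\ C p.

Definition spanned (M : V * V -> Prop) (v : V) : Prop :=
  exists w, M (v, w) \/ M (w, v).

Definition induced_vertex (X : V -> Prop) : Type := { v : V | X v }.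
Definition induced_edge (X : V -> Prop) (x y : induced_vertex X) : Prop :=
  E (proj1_sig x) (proj1_sig y).

End Defs.

Arguments induced_edge {V} E X x y.
Arguments induced_vertex {V} X.
Arguments quot_edge {W} D F X Y.
Arguments quot_vertex {W} F.

(* Main.v *)
Require Import Defs.
From Stdlib Require Import Lia List Relations Arith PeanoNat Classical ProofIrrelevance FunctionalExtensionality PropExtensionality ClassicalEpsilon.
Import ListNotations.
Set Implicit Arguments.


Section Basic.
Variable V : Type.
Variable E : V -> V -> Prop.
Hypothesis Hirr : forall a, ~ E a a.
Hypothesis Hsym : forall a b, E a b -> E b a.

Notation R := (clos_refl_trans (V * V) (Gamma E)).

Lemma G_sym p q : Gamma E p q -> Gamma E q p.
Proof.
  unfold Gamma. intros [h1 [h2 [[e n]|[e n]]]]; (split; [exact h2|split; [exact h1|]]).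
  - left. split; auto.
  - right. split; auto.
Qed.

Lemma G_swap p q : Gamma E p q -> Gamma E (swap p) (swap q).
Proof.
  destruct p as [a b], q as [c d]; unfold Gamma, edgeP, swap; simpl.
  intros [h1 [h2 [[e n]|[e n]]]]; split; auto; split; auto.
Qed.

Lemma R_sym p q : R p q -> R q p.
Proof.
  intro h; induction h.
  - apply rt_step, G_sym; auto.
  - apply rt_refl.
  - eapply rt_trans; eauto.
Qed.

Lemma R_swap p q : R p q -> R (swap p) (swap q).
Proof.
  intro h; induction h.
  - apply rt_step, G_swap; auto.
  - apply rt_refl.
  - eapply rt_trans; eauto.
Qed.

Lemma R_swap' a b c d : R (a,b) (c,d) -> R (b,a) (d,c).
Proof. intro h. exact (R_swap h). Qed.

Lemma R_tr p q s : R p q -> R q s -> R p s.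
Proof. intros; eapply rt_trans; eauto. Qed.

Lemma R_edge p q : R p q -> edgeP E p -> edgeP E q.
Proof.
  intro h; induction h; auto. intros _. destruct H as [_ [h2 _]]; auto.
Qed.

Lemma R_edge' p q : R p q -> p <> q -> edgeP E q.
Proof.
  intro h. apply clos_rt_rtn1 in h. destruct h.
  - intro c; congruence.
  - intros _. destruct H as [_ [h2 _]]; auto.
Qed.

Lemma mkG1 x y y' : E x y -> E x y' -> ~ E y y' -> Gamma E (x,y) (x,y').
Proof. intros; unfold Gamma, edgeP; simpl; auto. Qed.
Lemma mkG2 x x' y : E x y -> E x' y -> ~ E x x' -> Gamma E (x,y) (x',y).
Proof. intros; unfold Gamma, edgeP; simpl; auto. Qed.

Lemma TL a b c : E a b -> E a c -> E b c ->
  ~ R (b,c) (b,a) -> ~ R (b,c) (a,c) ->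
  forall p, R (b,c) p ->
   E a (fst p) /\ E a (snd p) /\ R (a,b) (a, fst p) /\ R (a,c) (a, snd p).
Proof.
  intros hab hac hbc H1 H2 p hp.
  apply clos_rt_rtn1 in hp.
  induction hp as [|q p' hg hq IH].
  - simpl. repeat split; auto; apply rt_refl.
  - destruct IH as [i1 [i2 [i3 i4]]].
    assert (hq' : R (b,c) p') by (apply clos_rtn1_rt; econstructor; eauto).
    destruct q as [b1 c1], p' as [b2 c2]; simpl in *.
    destruct hg as [eq1 [eq2 [[e n]|[e n]]]]; unfold edgeP in *; simpl in *.
    + subst b2.
      assert (hac2 : E a c2).
      { apply NNPP; intro na.
        apply H1. eapply R_tr. exact hq'.
        eapply R_tr. apply rt_step. 
        apply (@mkG1 _ _ a); auto.
        apply R_sym. apply (R_swap' i3). }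
      split; [auto|split; [auto|split; [auto|]]].
      eapply R_tr. exact i4. apply rt_step. apply mkG1; auto.
    + subst c2.
      assert (hab2 : E a b2).
      { apply NNPP; intro na.
        apply H2. eapply R_tr. exact hq'.
        eapply R_tr. apply rt_step.
        apply (@mkG2 _ a); auto.
        apply R_sym. exact i4. }
      split; [auto|split; [auto|split; [|auto]]].
      eapply R_tr. exact i3. apply rt_step. apply mkG1; auto.
Qed.

Lemma TL3 a b c : E a b -> E a c -> E b c ->
  ~ R (b,c) (b,a) -> ~ R (b,c) (a,c) ->
  forall p, R (b,c) p -> fst p <> a /\ snd p <> a.
Proof.
  intros hab hac hbc H1 H2 p hp.
  destruct (TL hab hac hbc H1 H2 hp) as [i1 [i2 _]].
  split; intro e; rewrite e in *; eapply Hirr; eauto.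
Qed.

End Basic.


Section Mx.
Variable V : Type.
Variable E : V -> V -> Prop.
Hypothesis Hirr : forall a, ~ E a a.
Hypothesis Hsym : forall a b, E a b -> E b a.
Variable VS : list V.
Variable r : nat.
Hypothesis HS : simplex E VS r.

Notation R := (clos_refl_trans (V * V) (Gamma E)).

Definition Mx (p : V * V) : Prop :=
  exists a b, In a VS /\ In b VS /\ a <> b /\ R (a,b) p.

Lemma S_edge a b : In a VS -> In b VS -> a <> b -> E a b.
Proof. destruct HS as [_ [_ [_ [h _]]]]. auto. Qed.

Definition colA (e : V * V) : V * V -> Prop := fun p => edgeP E p /\ R e p.
Definition colC (e : V * V) : V * V -> Prop := fun p => colA e p \/ colA e (swap p).

Lemma colC_color e : edgeP E e -> color_class E (colC e).
Proof.
  intro he. exists (colA e). split; [|intro; unfold colC; tauto].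
  exists e. split; auto. intro; unfold colA; tauto.
Qed.

Lemma SX a b c d : In a VS -> In b VS -> In c VS -> In d VS ->
  a <> b -> c <> d -> ~ ((a = c /\ b = d) \/ (a = d /\ b = c)) ->
  ~ R (a,b) (c,d).
Proof.
  intros ha hb hc hd nab ncd nn h.
  destruct HS as [_ [_ [_ [_ hc5]]]].
  apply (hc5 a b c d ha hb hc hd nab ncd nn (colC (a,b))).
  - apply colC_color. apply S_edge; auto.
  - split; left; split; unfold edgeP; simpl; try apply S_edge; auto.
    apply rt_refl.
Qed.

Lemma multiplex_iff p : multiplex E VS p <-> Mx p.
Proof.
  split.
  - intros [C [[A [[e [he hA]] hC]] [[q [[hq1 [hq2 hq3]] hCq]] hCp]]].
    apply hC in hCq. apply hC in hCp.
    assert (X : forall x, A x -> R e x) by (intros x hx; apply hA in hx; tauto).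
    assert (T : forall q', In (fst q') VS -> In (snd q') VS -> fst q' <> snd q' ->
                R e q' -> R e p \/ R e (swap p) -> Mx p).
    { intros [a b] h1 h2 h3 h4 [h5|h5]; simpl in *.
      - exists a, b. repeat split; auto. eapply R_tr. apply R_sym; eauto. auto.
      - exists b, a. split; [auto|split; [auto|split; [intro ee; apply h3; congruence|]]].
        assert (R (a,b) (swap p)) by (eapply R_tr; [apply R_sym; eauto|auto]).
        apply (R_swap Hsym) in H. destruct p; simpl in H. exact H. }
    destruct hCq as [h|h]; apply X in h.
    + eapply T; eauto. destruct hCp as [h'|h']; apply X in h'; auto.
    + destruct q as [a b]; simpl in *. eapply (T (b,a)); simpl; eauto.
      destruct hCp as [h'|h']; apply X in h'; auto.
  - intros [a [b [ha [hb [nab h]]]]].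
    exists (colC (a,b)). split; [apply colC_color; apply S_edge; auto|].
    split.
    + exists (a,b). split. unfold simplex_edge; simpl; auto.
      left. split; [apply S_edge; auto|apply rt_refl].
    + left. split; auto. eapply R_edge; eauto. apply S_edge; auto.
Qed.

Lemma Mx_edge p : Mx p -> edgeP E p.
Proof. intros [a [b [ha [hb [n h]]]]]. eapply R_edge; eauto. apply S_edge; auto. Qed.

Lemma Mx_swap p : Mx p -> Mx (swap p).
Proof.
  intros [a [b [ha [hb [n h]]]]]. exists b, a. repeat split; auto.
  apply (R_swap Hsym h).
Qed.

Lemma Mx_R p q : Mx p -> R p q -> Mx q.
Proof.
  intros [a [b [ha [hb [n h]]]]] h'. exists a, b. repeat split; auto. eapply R_tr; eauto.
Qed.

Definition Wv := spanned (multiplex E VS).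

Lemma W_iff v : Wv v <-> exists w, Mx (v,w).
Proof.
  unfold Wv, spanned. split.
  - intros [w [h|h]]; apply multiplex_iff in h; exists w; auto.
    apply Mx_swap in h; exact h.
  - intros [w h]. exists w. left. apply multiplex_iff; auto.
Qed.

Lemma Mx_W p : Mx p -> Wv (fst p) /\ Wv (snd p).
Proof.
  intro h. destruct p as [a b]. split; apply W_iff.
  - exists b; auto.
  - exists a. apply Mx_swap in h; exact h.
Qed.

Lemma VS_two : exists x y l, VS = x :: y :: l /\ x <> y.
Proof.
  destruct HS as [h1 [hnd [hl _]]].
  destruct VS as [|x [|y l]]; simpl in hl; try lia.
  exists x, y, l. split; auto.
  inversion hnd; subst. intro e; subst; apply H1; simpl; auto.
Qed.

Lemma In_W s : In s VS -> Wv s.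
Proof.
  intro hs. destruct VS_two as [x [y [l [eV nxy]]]].
  assert (hx : In x VS) by (rewrite eV; simpl; auto).
  assert (hy : In y VS) by (rewrite eV; simpl; auto).
  apply W_iff.
  destruct (classic (s = x)) as [e|ne].
  + subst. exists y. exists x, y. repeat split; auto. apply rt_refl.
  + exists x. exists s, x. repeat split; auto. apply rt_refl.
Qed.

End Mx.


Section Quot.
Variable T : Type.
Variable D : T -> T -> Prop.
Variable F : (T -> Prop) -> Prop.
Hypothesis HF : is_partition F.
Hypothesis HFm : forall X, F X -> partitive D X.

Lemma part_eq X Y w : F X -> F Y -> X w -> Y w -> X = Y.
Proof.
  intros hX hY h1 h2. destruct HF as [_ [hd _]].
  apply NNPP; intro n. eapply hd; eauto.
Qed.

Lemma qv_eq (P Q : quot_vertex F) : proj1_sig P = proj1_sig Q -> P = Q.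
Proof.
  destruct P as [P hP], Q as [Q hQ]; simpl. intro e; subst.
  f_equal. apply proof_irrelevance.
Qed.

Lemma qv_share (P Q : quot_vertex F) w : proj1_sig P w -> proj1_sig Q w -> P = Q.
Proof.
  intros h1 h2. apply qv_eq. eapply part_eq; eauto; [apply (proj2_sig P)|apply (proj2_sig Q)].
Qed.

Lemma QE (P Q : quot_vertex F) a c : P <> Q -> proj1_sig P a -> proj1_sig Q c ->
  (D a c <-> quot_edge D F P Q).
Proof.
  intros n ha hc. split.
  - intro h. split; auto. exists a, c; auto.
  - intros [_ [x [y [hx [hy hxy]]]]].
    assert (yP : ~ proj1_sig P y) by (intro h; apply n; exact (qv_share P Q y h hy)).
    assert (aQ : ~ proj1_sig Q a) by (intro h; apply n; exact (qv_share P Q a ha h)).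
    pose proof (HFm (proj2_sig P)) as mP. pose proof (HFm (proj2_sig Q)) as mQ.
    destruct (mP x a y hx ha yP) as [i1 _].
    destruct (mQ y c a hy hc aQ) as [_ i2].
    apply i2, i1, hxy.
Qed.

End Quot.

Section Sub.
Variable V : Type.
Variable E : V -> V -> Prop.
Hypothesis Hsym : forall a b, E a b -> E b a.
Variable W : V -> Prop.

Definition modV (Q : V -> Prop) : Prop :=
  forall a b c, W a -> W b -> W c -> Q a -> Q b -> ~ Q c -> (E a c <-> E b c).

Definition sub (Q : V -> Prop) : induced_vertex W -> Prop := fun x => Q (proj1_sig x).

Definition Yv (Y : induced_vertex W -> Prop) (v : V) : Prop := exists h : W v, Y (exist _ v h).

Lemma part_sub Q : modV Q -> partitive (induced_edge E W) (sub Q).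
Proof.
  intros hm [a ha] [b hb] [c hc]; unfold sub, induced_edge; simpl. intros h1 h2 h3.
  pose proof (hm a b c ha hb hc h1 h2 h3) as i.
  split; auto. split; intro h; apply Hsym, i, Hsym, h.
Qed.

Lemma part_Yv Y : partitive (induced_edge E W) Y -> modV (Yv Y).
Proof.
  intros hp a b c ha hb hc [ha' h1] [hb' h2] h3.
  assert (n : ~ Y (exist _ c hc)) by (intro h; apply h3; exists hc; exact h).
  exact (proj1 (hp _ _ _ h1 h2 n)).
Qed.

Lemma Yv_iff Y (x : induced_vertex W) : Y x <-> Yv Y (proj1_sig x).
Proof.
  destruct x as [v h]; simpl. split.
  - intro y; exists h; exact y.
  - intros [h' y]. rewrite (proof_irrelevance _ h h'). exact y.
Qed.

Lemma Yv_W Y v : Yv Y v -> W v.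
Proof. intros [h _]; exact h. Qed.

Lemma Yv_sub Q v : Yv (sub Q) v <-> W v /\ Q v.
Proof.
  split.
  - intros [h y]. split; auto.
  - intros [h y]. exists h. exact y.
Qed.

Lemma mod_union X Y z : modV X -> modV Y -> W z -> X z -> Y z ->
  modV (fun v => X v \/ Y v).
Proof.
  intros mX mY hz xz yz a b c ha hb hc h1 h2 h3.
  assert (nX : ~ X c) by tauto. assert (nY : ~ Y c) by tauto.
  assert (ea : E a c <-> E z c) by (destruct h1; [apply (mX a z c)|apply (mY a z c)]; auto).
  assert (eb : E b c <-> E z c) by (destruct h2; [apply (mX b z c)|apply (mY b z c)]; auto).
  tauto.
Qed.

End Sub.


Section R2.
Variable V : Type.
Variable E : V -> V -> Prop.
Hypothesis Hirr : forall a, ~ E a a.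
Hypothesis Hsym : forall a b, E a b -> E b a.
Variable VS : list V.
Variable r : nat.
Hypothesis HS : simplex E VS r.

Notation R := (clos_refl_trans (V * V) (Gamma E)).
Notation W := (Wv E VS).

Lemma sx a b c d : In a VS -> In b VS -> In c VS -> In d VS ->
  a <> b -> c <> d -> ~ ((a = c /\ b = d) \/ (a = d /\ b = c)) ->
  ~ R (a,b) (c,d).
Proof. intros; eapply SX; eauto. Qed.

Lemma se a b : In a VS -> In b VS -> a <> b -> E a b.
Proof. intros; eapply S_edge; eauto. Qed.

Lemma F2 Y p q : modV E W Y -> Mx E VS p -> Y (fst p) -> Y (snd p) -> R p q ->
  Y (fst q) /\ Y (snd q).
Proof.
  intros mY hp y1 y2 h. apply clos_rt_rtn1 in h.
  induction h as [|q q' hg hq IH]; auto.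
  destruct IH as [i1 i2].
  assert (Mq : Mx E VS q) by (eapply Mx_R; eauto; apply clos_rtn1_rt; auto).
  assert (Mq' : Mx E VS q') by (eapply Mx_R; [exact Mq|apply rt_step; exact hg]).
  destruct (Mx_W Hsym HS Mq) as [w1 w2].
  destruct (Mx_W Hsym HS Mq') as [w1' w2'].
  destruct hg as [e1 [e2 [[e n]|[e n]]]]; unfold edgeP in *.
  - rewrite <- e. split; auto. apply NNPP; intro nb.
    pose proof (mY _ _ _ w1 w2 w2' i1 i2 nb) as X.
    apply n, X. rewrite e; auto.
  - rewrite <- e. split; auto. apply NNPP; intro nb.
    pose proof (mY _ _ _ w2 w1 w1' i2 i1 nb) as X.
    apply n, X. apply Hsym. rewrite e; auto.
Qed.

Lemma inW {s} : In s VS -> W s.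
Proof. intros; eapply In_W; eauto. Qed.

Hypothesis Hr : 2 <= r.

Lemma third s t : exists k, In k VS /\ k <> s /\ k <> t.
Proof.
  destruct HS as [_ [hnd [hl _]]].
  destruct VS as [|x [|y [|z l]]]; simpl in hl; try lia.
  inversion hnd; subst. inversion H2; subst.
  assert (xy : x <> y) by (intro e; apply H1; subst; simpl; auto).
  assert (xz : x <> z) by (intro e; apply H1; subst; simpl; auto).
  assert (yz : y <> z) by (intro e; apply H3; subst; simpl; auto).
  destruct (classic (x = s)); destruct (classic (x = t)).
  - subst. exists y. simpl; auto.
  - subst. destruct (classic (y = t)).
    + subst. exists z. simpl; auto.
    + exists y. simpl; auto.
  - subst. destruct (classic (y = s)).
    + subst. exists z. simpl; auto.
    + exists y. simpl; auto.
  - exists x. simpl; auto.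
Qed.

Lemma TLS a b c p : In a VS -> In b VS -> In c VS -> a <> b -> a <> c -> b <> c ->
  R (b,c) p -> E a (fst p) /\ E a (snd p) /\ R (a,b) (a, fst p) /\ R (a,c) (a, snd p).
Proof.
  intros ha hb hc nab nac nbc h.
  apply (TL Hsym); auto using se.
  - apply sx; auto. intros [[e1 e2]|[e1 e2]]; congruence.
  - apply sx; auto. intros [[e1 e2]|[e1 e2]]; congruence.
Qed.

Definition Vs s v := forall t, In t VS -> t <> s -> R (t,s) (t,v).

Lemma Vb s t v w : In s VS -> In t VS -> s <> t -> R (s,t) (v,w) -> Vs s v.
Proof.
  intros hs ht nst h u hu nus.
  destruct (classic (u = t)) as [e|n].
  - subst u. destruct (third s t) as [k [hk [nks nkt]]].
    destruct (TLS (a:=k) hk hs ht nks nkt nst h) as [_ [_ [h1 _]]]. simpl in h1.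
    apply (R_swap' Hsym) in h1.
    destruct (TLS (a:=t) (p:=(v,k)) ht hs hk nus (fun e => nkt (eq_sym e)) (fun e => nks (eq_sym e)) h1)
      as [_ [_ [h2 _]]]. exact h2.
  - destruct (TLS (a:=u) hu hs ht nus n nst h) as [_ [_ [h1 _]]]. exact h1.
Qed.

Lemma Vdisj s t v : In s VS -> In t VS -> Vs s v -> Vs t v -> s = t.
Proof.
  intros hs ht h1 h2. apply NNPP; intro n.
  destruct (third s t) as [k [hk [nks nkt]]].
  apply (sx (a:=k) (b:=s) (c:=k) (d:=t)); auto.
  - intros [[e1 e2]|[e1 e2]]; congruence.
  - eapply R_tr. apply h1; auto. apply (R_sym Hsym). apply h2; auto.
Qed.

Lemma Vd s t v u : In s VS -> In t VS -> s <> t -> Vs s v -> Vs t u ->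
  E v u /\ R (s,t) (v,u).
Proof.
  intros hs ht nst hv hu.
  destruct (third s t) as [k [hk [nks nkt]]].
  assert (h1 : R (t,s) (t,v)) by (apply hv; auto).
  assert (h2 : R (k,s) (k,v)) by (apply hv; auto).
  assert (h3 : R (k,t) (k,u)) by (apply hu; auto).
  assert (evt : E v t).
  { apply Hsym. exact (R_edge h1 (se ht hs (fun e => nst (eq_sym e)))). }
  assert (evk : E v k).
  { apply Hsym. exact (R_edge h2 (se hk hs nks)). }
  assert (etk : E t k) by (apply se; auto).
  assert (H1 : ~ R (t,k) (t,v)).
  { intro h. apply (sx (a:=t) (b:=k) (c:=t) (d:=s)); auto.
    - intros [[e1 e2]|[e1 e2]]; congruence.
    - eapply R_tr. exact h. apply (R_sym Hsym). exact h1. }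
  assert (H2 : ~ R (t,k) (v,k)).
  { intro h. apply (sx (a:=t) (b:=k) (c:=s) (d:=k)); auto.
    - intros [[e1 e2]|[e1 e2]]; congruence.
    - eapply R_tr. exact h. apply (R_sym Hsym). apply (R_swap' Hsym). exact h2. }
  destruct (TL Hsym evt evk etk H1 H2 (p := (u,k)) (R_swap' Hsym h3)) as [i1 [_ [i3 _]]].
  simpl in *. split; auto.
  eapply R_tr. apply (R_swap' Hsym). exact h1. exact i3.
Qed.

Lemma Vs_refl s : Vs s s.
Proof. intros t _ _; apply rt_refl. Qed.

Lemma Vs_W s v : In s VS -> Vs s v -> W v.
Proof.
  intros hs hv. destruct (third s s) as [t [ht [n _]]].
  assert (M : Mx E VS (t,v)) by (exists t, s; repeat split; auto).
  exact (proj2 (Mx_W Hsym HS M)).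
Qed.

Lemma W_Vs v : W v -> exists s, In s VS /\ Vs s v.
Proof.
  intro hv. apply (W_iff Hsym HS) in hv. destruct hv as [w [a [b [ha [hb [n h]]]]]].
  exists a. split; auto. eapply Vb; eauto.
Qed.

Lemma Vs_mod s : In s VS -> modV E W (Vs s).
Proof.
  intros hs a b c ha hb hc h1 h2 h3.
  destruct (W_Vs hc) as [t [ht hct]].
  assert (n : s <> t) by (intro e; subst; auto).
  destruct (Vd hs ht n h1 hct). destruct (Vd hs ht n h2 hct). tauto.
Qed.

Definition Fr2 (X : induced_vertex W -> Prop) : Prop :=
  exists s, In s VS /\ X = sub (Vs s).

Lemma r2_partition : is_partition Fr2.
Proof.
  split; [|split].
  - intros X [s [hs e]]. subst. exists (exist _ s (inW hs)). apply Vs_refl.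
  - intros X Y [s [hs e1]] [t [ht e2]] n w h1 h2. subst.
    apply n. unfold sub in *. rewrite (Vdisj hs ht h1 h2). auto.
  - intros [w hw]. destruct (W_Vs hw) as [s [hs h]].
    exists (sub (Vs s)). split; [exists s; auto|exact h].
Qed.

Lemma subS_eq (a b : {v | In v VS}) : proj1_sig a = proj1_sig b -> a = b.
Proof.
  destruct a, b; simpl; intro; subst; f_equal; apply proof_irrelevance.
Qed.

Lemma Vs_Mx s t v u : In s VS -> In t VS -> s <> t -> Vs s v -> Vs t u -> Mx E VS (v,u).
Proof.
  intros hs ht n hv hu. destruct (Vd hs ht n hv hu) as [_ h].
  exists s, t; repeat split; auto.
Qed.

Lemma r2_maxstrong X : Fr2 X -> max_strong_partitive (induced_edge E W) X.
Proof.
  intros [s [hs e]]. subst X.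
  assert (ms : modV E W (Vs s)) by (apply Vs_mod; auto).
  split; [split|split].
  - apply part_sub; auto.
  - intros Y hY [z [hz1 hz2]].
    pose proof (part_Yv hY) as mY.
    destruct (classic (forall w, sub (Vs s) w -> Y w)) as [h|h]; [left; auto|right].
    apply not_all_ex_not in h. destruct h as [x' h].
    assert (hx1 : Vs s (proj1_sig x')) by tauto.
    assert (hx2 : ~ Y x') by tauto.
    intros w hw. apply NNPP; intro nw. unfold sub in nw.
    destruct (W_Vs (proj2_sig w)) as [t [ht hwt]].
    assert (n : s <> t) by (intro e; subst; auto).
    destruct (Vd hs ht n hz1 hwt) as [_ r1].
    destruct (Vd hs ht n hx1 hwt) as [_ r2].
    assert (M : Mx E VS (proj1_sig z, proj1_sig w)) by (exists s, t; repeat split; auto).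
    destruct (F2 (Y := Yv Y) (q := (proj1_sig x', proj1_sig w)) mY M) as [f1 _]; simpl.
    + apply Yv_iff; auto.
    + apply Yv_iff; auto.
    + eapply R_tr. apply (R_sym Hsym). exact r1. exact r2.
    + apply hx2. apply Yv_iff. exact f1.
  - intro hall. destruct (third s s) as [t [ht [n _]]].
    pose proof (hall (exist _ t (inW ht))) as h. unfold sub in h; simpl in h.
    apply n. eapply Vdisj; eauto. apply Vs_refl.
  - intros Y [hYp hYs] nall hsub.
    pose proof (part_Yv hYp) as mY.
    assert (Ys : Yv Y s).
    { apply (Yv_iff Y (exist _ s (inW hs))). apply hsub. apply Vs_refl. }
    intros w hw. apply NNPP; intro nw. unfold sub in nw.
    destruct (W_Vs (proj2_sig w)) as [t [ht hwt]].
    assert (n : s <> t) by (intro e; subst; auto).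
    apply nall. intro x. destruct (W_Vs (proj2_sig x)) as [u [hu hxu]].
    destruct (classic (u = s)) as [e1|n1]; [subst; apply hsub; exact hxu|].
    destruct (classic (u = t)) as [e2|n2].
    + subst u. apply Yv_iff.
      assert (M : Mx E VS (s, proj1_sig w)).
      { exists s, t. repeat split; auto. }
      destruct (F2 (Y := Yv Y) (q := (s, proj1_sig x)) mY M) as [_ f2]; simpl; auto.
      * apply Yv_iff; auto.
      * eapply R_tr. apply (R_sym Hsym). apply hwt; auto. apply hxu; auto.
    + set (X' := fun v => Vs s v \/ Vs u v).
      assert (mX : modV E W X').
      { intros a b c ha hb hc h1 h2 h3.
        destruct (W_Vs hc) as [k [hk hck]].
        assert (k <> s) by (intro e; subst; apply h3; left; auto).
        assert (k <> u) by (intro e; subst; apply h3; right; auto).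
        assert (ea : E a c).
        { destruct h1 as [h1|h1]; [apply (Vd hs hk)|apply (Vd hu hk)]; auto. }
        assert (eb : E b c).
        { destruct h2 as [h2|h2]; [apply (Vd hs hk)|apply (Vd hu hk)]; auto. }
        tauto. }
      pose proof (part_sub Hsym mX) as pX.
      assert (ov : exists z, Y z /\ sub X' z).
      { exists (exist _ s (inW hs)). split.
        - apply hsub. apply Vs_refl.
        - left. apply Vs_refl. }
      destruct (hYs _ pX ov) as [h|h].
      * exfalso. destruct (h w hw) as [h'|h']; [auto|].
        apply n2. eapply Vdisj; eauto.
      * apply h. right. exact hxu.
Qed.

Lemma r2_notall : ~ ((exists X, Fr2 X /\ forall w, X w) /\ (forall X, Fr2 X -> forall w, X w)).
Proof.
  intros [_ h]. destruct (@VS_two _ _ _ _ HS) as [x [y [l [eV n]]]].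
  assert (hx : In x VS) by (rewrite eV; simpl; auto).
  assert (hy : In y VS) by (rewrite eV; simpl; auto).
  pose proof (h (sub (Vs x)) (ex_intro _ x (conj hx eq_refl)) (exist _ y (inW hy))) as h'.
  unfold sub in h'; simpl in h'. apply n. eapply Vdisj; eauto. apply Vs_refl.
Qed.

Lemma r2_iso : graph_iso (quot_edge (induced_edge E W) Fr2) (induced_edge E (fun v => In v VS)).
Proof.
  assert (ch : forall P : quot_vertex Fr2, {s | In s VS /\ proj1_sig P = sub (Vs s)}).
  { intro P. apply constructive_indefinite_description. exact (proj2_sig P). }
  pose (f := fun P : quot_vertex Fr2 =>
          exist (fun v => In v VS) (proj1_sig (ch P)) (proj1 (proj2_sig (ch P)))).
  pose (g := fun s : {v | In v VS} =>
          exist Fr2 (sub (Vs (proj1_sig s))) (ex_intro _ (proj1_sig s) (conj (proj2_sig s) eq_refl))).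
  assert (Pp : is_partition Fr2) by apply r2_partition.
  assert (Pm : forall X, Fr2 X -> partitive (induced_edge E W) X).
  { intros X hX. destruct (r2_maxstrong hX) as [[h _] _]; exact h. }
  assert (key : forall P s, In s VS -> proj1_sig P = sub (Vs s) -> proj1_sig (f P) = s).
  { intros P s hs e. unfold f; simpl. destruct (ch P) as [s' [hs' e']]; simpl.
    rewrite e in e'.
    pose proof (f_equal (fun X => X (exist _ s (inW hs))) e') as h.
    unfold sub in h; simpl in h.
    assert (h2 : Vs s' s) by (rewrite <- h; apply Vs_refl).
    eapply Vdisj; eauto. apply Vs_refl. }
  assert (mem : forall P, proj1_sig P (exist _ (proj1_sig (f P)) (inW (proj2_sig (f P))))).
  { intro P. unfold f; simpl. destruct (ch P) as [s' [hs' e']]; simpl. rewrite e'. apply Vs_refl. }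
  exists f, g. split; [|split].
  - intro P. apply qv_eq. simpl. unfold f; simpl. destruct (ch P) as [s' [hs' e']]; simpl. auto.
  - intro s. apply subS_eq. apply key. exact (proj2_sig s). reflexivity.
  - intros P Q. unfold induced_edge at 1.
    destruct (classic (P = Q)) as [e|n].
    + subst. split; [intros [h _]; congruence|intro h; exfalso; eapply Hirr; eauto].
    + rewrite <- (@QE _ _ _ Pp Pm P Q _ _ n (mem P) (mem Q)). unfold induced_edge; simpl. tauto.
Qed.

End R2.


Section R1.
Variable V : Type.
Variable E : V -> V -> Prop.
Hypothesis Hirr : forall a, ~ E a a.
Hypothesis Hsym : forall a b, E a b -> E b a.
Variable VS : list V.
Variable r : nat.
Hypothesis HS : simplex E VS r.
Variables s0 s1 : V.
Hypothesis HV : VS = [s0; s1].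
Hypothesis n01 : s0 <> s1.

Notation R := (clos_refl_trans (V * V) (Gamma E)).
Notation W := (Wv E VS).
Notation MX := (Mx E VS).

Lemma Mx1 p : MX p -> R (s0,s1) p \/ R (s0,s1) (swap p).
Proof.
  intros [a [b [ha [hb [n h]]]]]. rewrite HV in ha, hb. simpl in ha, hb.
  destruct ha as [<-|[<-|[]]]; destruct hb as [<-|[<-|[]]]; try congruence.
  - left; auto.
  - right. apply (R_swap Hsym) in h. destruct p; exact h.
Qed.

Lemma M4 p q : MX p -> MX q -> R p q \/ R p (swap q).
Proof.
  intros hp hq. destruct (Mx1 hp) as [h1|h1]; destruct (Mx1 hq) as [h2|h2].
  - left. exact (R_tr (R_sym Hsym h1) h2).
  - right. exact (R_tr (R_sym Hsym h1) h2).
  - right. apply (R_swap Hsym) in h1. apply (R_swap Hsym) in h2. destruct p, q; simpl in *.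
    exact (R_tr (R_sym Hsym h1) h2).
  - left. apply (R_swap Hsym) in h1. apply (R_swap Hsym) in h2. destruct p, q; simpl in *.
    exact (R_tr (R_sym Hsym h1) h2).
Qed.

Lemma MXedge p : MX p -> E (fst p) (snd p).
Proof. intro h. exact (Mx_edge Hsym HS h). Qed.

Lemma MXW p : MX p -> W (fst p) /\ W (snd p).
Proof. intro h. exact (Mx_W Hsym HS h). Qed.

Lemma MXs : MX (s0,s1).
Proof. exists s0, s1. rewrite HV. repeat split; simpl; auto. apply rt_refl. Qed.

Lemma Ws0 : W s0.
Proof. exact (proj1 (MXW MXs)). Qed.
Lemma Ws1 : W s1.
Proof. exact (proj2 (MXW MXs)). Qed.

Lemma allin Y p : modV E W Y -> MX p -> Y (fst p) -> Y (snd p) -> forall v, W v -> Y v.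
Proof.
  intros mY hp y1 y2 v hv. apply (W_iff Hsym HS) in hv. destruct hv as [w hw].
  destruct (M4 hp hw) as [h|h].
  - exact (proj1 (F2 Hsym HS mY hp y1 y2 h)).
  - exact (proj2 (F2 Hsym HS mY hp y1 y2 h)).
Qed.

Definition free (Y : V -> Prop) := forall a b, Y a -> Y b -> ~ MX (a,b).

Lemma helper X Y z u v w : modV E W X -> modV E W Y -> W z -> X z -> Y z ->
  W u -> W v -> W w -> X u -> ~ Y u -> Y v -> ~ X v -> E u v -> E u w -> ~ E v w ->
  Y w /\ ~ X w.
Proof.
  intros mX mY hz xz yz hu hv hw xu yu yv xv euv euw nvw.
  assert (nx : ~ X w).
  { intro xw. apply nvw. apply Hsym. apply (mX u w v); auto. }
  split; auto. apply NNPP; intro yw.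
  apply nvw. apply (mY v z w); auto. apply (mX u z w); auto.
Qed.

Definition inv (X Y : V -> Prop) (q : V * V) :=
  (X (fst q) /\ ~ Y (fst q) /\ Y (snd q) /\ ~ X (snd q)) \/
  (Y (fst q) /\ ~ X (fst q) /\ X (snd q) /\ ~ Y (snd q)).

Lemma claim2 X Y z : modV E W X -> modV E W Y -> free X -> free Y -> W z -> X z -> Y z ->
  free (fun v => X v \/ Y v).
Proof.
  intros mX mY fX fY hz xz yz a b ha hb M.
  assert (I0 : inv X Y (a,b)).
  { unfold inv; simpl.
    assert (~ (X a /\ X b)) by (intros [p1 p2]; exact (fX a b p1 p2 M)).
    assert (~ (Y a /\ Y b)) by (intros [p1 p2]; exact (fY a b p1 p2 M)).
    destruct (classic (X a)); destruct (classic (Y a)); destruct (classic (X b)); destruct (classic (Y b));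
    tauto. }
  assert (Ich : forall q, R (a,b) q -> inv X Y q).
  { intros q h. apply clos_rt_rtn1 in h.
    induction h as [|q q' hg hq IH]; auto.
    assert (Mq : MX q) by (eapply Mx_R; eauto; apply clos_rtn1_rt; auto).
    assert (Mq' : MX q') by (eapply Mx_R; [exact Mq|apply rt_step; exact hg]).
    destruct (MXW Mq) as [w1 w2]. destruct (MXW Mq') as [w1' w2'].
    pose proof (MXedge Mq) as eq. pose proof (MXedge Mq') as eq'.
    destruct q as [q1 q2], q' as [q1' q2']; unfold inv in *; simpl in *.
    destruct hg as [_ [_ [[e n]|[e n]]]]; simpl in *; subst.
    - destruct IH as [[i1 [i2 [i3 i4]]]|[i1 [i2 [i3 i4]]]].
      + left. destruct (helper mX mY hz xz yz w1 w2 w2' i1 i2 i3 i4 eq eq' n). tauto.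
      + right. destruct (helper mY mX hz yz xz w1 w2 w2' i1 i2 i3 i4 eq eq' n). tauto.
    - destruct IH as [[i1 [i2 [i3 i4]]]|[i1 [i2 [i3 i4]]]].
      + left. destruct (helper mY mX hz yz xz w2 w1 w1' i3 i4 i1 i2 (Hsym eq) (Hsym eq') n). tauto.
      + right. destruct (helper mX mY hz xz yz w2 w1 w1' i3 i4 i1 i2 (Hsym eq) (Hsym eq') n). tauto. }
  apply (W_iff Hsym HS) in hz. destruct hz as [w hw].
  destruct (M4 M hw) as [h|h]; apply Ich in h; unfold inv in h; simpl in h; tauto.
Qed.

Definition B w u := exists Y, modV E W Y /\ free Y /\ Y w /\ Y u.

Lemma B_self w : B w w.
Proof.
  exists (fun u => u = w). split; [|split; [|split; reflexivity]].
  - intros a b c _ _ _ e1 e2 _. rewrite e1, e2. tauto.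
  - intros a b e1 e2 M. rewrite e1, e2 in M. exact (Hirr (MXedge M)).
Qed.

Lemma B_mod w : W w -> modV E W (B w).
Proof.
  intros hw a b c ha hb hc [Y1 [m1 [f1 [y1w y1a]]]] [Y2 [m2 [f2 [y2w y2b]]]] nc.
  assert (n1 : ~ Y1 c) by (intro h; apply nc; exists Y1; auto).
  assert (n2 : ~ Y2 c) by (intro h; apply nc; exists Y2; auto).
  pose proof (m1 a w c ha hw hc y1a y1w n1). pose proof (m2 b w c hb hw hc y2b y2w n2). tauto.
Qed.

Lemma B_free w : W w -> free (B w).
Proof.
  intros hw a b [Y1 [m1 [f1 [y1w y1a]]]] [Y2 [m2 [f2 [y2w y2b]]]].
  apply (claim2 m1 m2 f1 f2 hw y1w y2w); auto.
Qed.

Lemma B_max {w} {Y} : modV E W Y -> free Y -> Y w -> forall u, Y u -> B w u.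
Proof. intros; exists Y; auto. Qed.

Lemma B_union w u : W w -> W u -> B w u -> forall v, B u v <-> B w v.
Proof.
  intros hw hu h.
  assert (s1' : forall v, B w v -> B u v).
  { intros v hv. apply (B_max (B_mod hw) (B_free hw)); auto. }
  assert (wu : B u w) by (apply s1'; apply B_self).
  intro v; split; auto.
  intro hv. apply (B_max (B_mod hu) (B_free hu)); auto.
Qed.

Lemma subB_eq w u : (forall v, B u v <-> B w v) -> sub (W:=W) (B u) = sub (B w).
Proof.
  intro h. apply functional_extensionality. intro x. unfold sub.
  apply propositional_extensionality. auto.
Qed.

Definition F1 (X : induced_vertex W -> Prop) : Prop :=
  exists w, W w /\ X = sub (B w).

Lemma r1_partition : is_partition F1.
Proof.
  split; [|split].
  - intros X [w [hw e]]. subst. exists (exist _ w hw). apply B_self.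
  - intros X Y [w [hw e1]] [u [hu e2]] n x h1 h2. subst.
    apply n. unfold sub in h1, h2.
    pose proof (proj2_sig x) as hx. simpl in hx.
    rewrite <- (subB_eq (B_union hw hx h1)). rewrite <- (subB_eq (B_union hu hx h2)). auto.
  - intros [w hw]. exists (sub (B w)). split; [exists w; auto|apply B_self].
Qed.

Lemma not_both w : W w -> ~ (B w s0 /\ B w s1).
Proof. intros hw [h0 h1]. exact (B_free hw h0 h1 MXs). Qed.

Lemma r1_maxstrong X : F1 X -> max_strong_partitive (induced_edge E W) X.
Proof.
  intros [w [hw e]]. subst X.
  split; [split|split].
  - apply part_sub; auto. apply B_mod; auto.
  - intros Y hY [z [hz1 hz2]].
    pose proof (part_Yv hY) as mY.
    destruct (classic (exists a b, Yv Y a /\ Yv Y b /\ MX (a,b))) as [[a [b [ya [yb M]]]]|nf].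
    + left. intros x _. apply Yv_iff. exact (allin mY M ya yb (proj2_sig x)).
    + right. assert (fY : free (Yv Y)) by (intros a b ya yb M; apply nf; eauto).
      assert (zW : W (proj1_sig z)) by exact (proj2_sig z).
      pose proof (@mod_union _ _ _ _ _ _ (B_mod hw) mY zW hz1 (proj1 (Yv_iff Y z) hz2)) as mU.
      pose proof (claim2 (B_mod hw) mY (B_free hw) fY zW hz1 (proj1 (Yv_iff Y z) hz2)) as fU.
      intros x hx. unfold sub. apply (B_max mU fU (or_introl (B_self w))).
      right. apply Yv_iff; auto.
  - intro hall.
    apply (not_both hw). split.
    + exact (hall (exist _ s0 Ws0)).
    + exact (hall (exist _ s1 Ws1)).
  - intros Y [hYp hYs] nall hsub.
    pose proof (part_Yv hYp) as mY.
    destruct (classic (exists a b, Yv Y a /\ Yv Y b /\ MX (a,b))) as [[a [b [ya [yb M]]]]|nf].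
    + exfalso. apply nall. intro x. apply Yv_iff. exact (allin mY M ya yb (proj2_sig x)).
    + assert (fY : free (Yv Y)) by (intros a b ya yb M; apply nf; eauto).
      assert (yw : Yv Y w).
      { apply (Yv_iff Y (exist _ w hw)). apply hsub. apply B_self. }
      intros x hx. unfold sub. apply (B_max mY fY yw). apply Yv_iff; auto.
Qed.

Lemma r1_notall : ~ ((exists X, F1 X /\ forall w, X w) /\ (forall X, F1 X -> forall w, X w)).
Proof.
  intros [_ h].
  pose proof (h (sub (B s0)) (ex_intro _ s0 (conj Ws0 eq_refl)) (exist _ s1 Ws1)) as h1.
  unfold sub in h1; simpl in h1.
  apply (not_both Ws0). split; auto. apply B_self.
Qed.

Lemma cross x y : W x -> W y -> E x y -> ~ B x y -> MX (x,y).
Proof.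
  intros hx hy exy nb. apply NNPP; intro nM.
  set (spanD := fun u => exists p, R (x,y) p /\ (fst p = u \/ snd p = u)).
  assert (within : forall v p, ~ spanD v -> R (x,y) p -> (E v (fst p) <-> E v (snd p))).
  { intros v [a b] nv hp. pose proof (R_edge hp exy) as eab. unfold edgeP in eab; simpl in *.
    split; intro h; apply NNPP; intro h'.
    - apply nv. exists (a,v). split; [|simpl; auto].
      eapply R_tr. exact hp. apply rt_step. apply mkG1; auto.
    - apply nv. exists (v,b). split; [|simpl; auto].
      eapply R_tr. exact hp. apply rt_step. apply mkG2; auto. }
  assert (const : forall v p, ~ spanD v -> R (x,y) p ->
             (E v (fst p) <-> E v x) /\ (E v (snd p) <-> E v x)).
  { intros v p nv hp. pose proof hp as hp0. apply clos_rt_rtn1 in hp.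
    induction hp as [|q q' hg hq IH].
    - simpl. pose proof (within v (x,y) nv (rt_refl _ _ _)). simpl in *. tauto.
    - assert (hq0 : R (x,y) q) by (apply clos_rtn1_rt; auto).
      destruct (IH hq0) as [i1 i2].
      pose proof (within v q' nv hp0) as w'.
      destruct hg as [_ [_ [[e _]|[e _]]]].
      + rewrite <- e in w' |- *. tauto.
      + rewrite <- e in w' |- *. tauto. }
  assert (mU : modV E W spanD).
  { intros a b c ha hb hc [p1 [h1 o1]] [p2 [h2 o2]] nc.
    destruct (const c p1 nc h1). destruct (const c p2 nc h2).
    assert (E c a <-> E c x) by (destruct o1 as [<-|<-]; auto).
    assert (E c b <-> E c x) by (destruct o2 as [<-|<-]; auto).
    split; intro h; apply Hsym; apply Hsym in h; tauto. }
  destruct (classic (exists u, W u /\ ~ spanD u)) as [[u [hu nu]]|hall].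
  - assert (fU : free spanD).
    { intros a b ha hb M. apply nu. exact (allin mU M ha hb hu). }
    apply nb. apply (B_max mU fU).
    + exists (x,y). split; [apply rt_refl|simpl; auto].
    + exists (x,y). split; [apply rt_refl|simpl; auto].
  - assert (hall' : forall u, W u -> spanD u).
    { intros u hu. apply NNPP; intro n. apply hall; eauto. }
    apply (W_iff Hsym HS) in hx. destruct hx as [z hz].
    destruct (MXW hz) as [_ wz]. simpl in wz.
    pose proof (MXedge hz) as exz. simpl in exz.
    assert (eyz : E y z).
    { apply NNPP; intro n. apply nM. eapply Mx_R. exact hz.
      apply (R_sym Hsym). apply rt_step. apply mkG1; auto. }
    destruct (classic (MX (y,z))) as [myz|nmyz].
    + assert (H1 : ~ R (x,y) (x,z)).
      { intro h. apply nM. eapply Mx_R. exact hz. apply (R_sym Hsym). exact h. }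
      assert (H2 : ~ R (x,y) (z,y)).
      { intro h. apply nM. eapply Mx_R. apply (Mx_swap Hsym). exact myz.
        apply (R_sym Hsym). exact h. }
      destruct (hall' z wz) as [p [hp o]].
      destruct (TL3 Hirr Hsym (a:=z) (Hsym exz) (Hsym eyz) exy H1 H2 hp) as [t1 t2].
      destruct o; auto.
    + assert (H1 : ~ R (x,z) (x,y)).
      { intro h. apply nM. eapply Mx_R. exact hz. exact h. }
      assert (H2 : ~ R (x,z) (y,z)).
      { intro h. apply nmyz. eapply Mx_R. exact hz. exact h. }
      apply (W_iff Hsym HS) in hy. destruct hy as [w' hw'].
      destruct (M4 hz hw') as [h|h].
      * destruct (TL3 Hirr Hsym (a:=y) (Hsym exy) eyz exz H1 H2 h) as [t1 _]. auto.
      * destruct (TL3 Hirr Hsym (a:=y) (Hsym exy) eyz exz H1 H2 h) as [_ t2]. auto.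
Qed.

Lemma r1_part_all : forall X, F1 X -> partitive (induced_edge E W) X.
Proof. intros X hX. destruct (r1_maxstrong hX) as [[h _] _]; exact h. Qed.

Definition chP (P : quot_vertex F1) : {w | W w /\ proj1_sig P = sub (B w)} :=
  constructive_indefinite_description _ (proj2_sig P).

Definition rep (P : quot_vertex F1) : V := proj1_sig (chP P).

Lemma rep_W P : W (rep P).
Proof. unfold rep. destruct (chP P) as [w [hw e]]; auto. Qed.

Lemma rep_eq P : proj1_sig P = sub (B (rep P)).
Proof. unfold rep. destruct (chP P) as [w [hw e]]; auto. Qed.

Lemma mem P v (h : W v) : B (rep P) v -> proj1_sig P (exist _ v h).
Proof. intro hb. rewrite rep_eq. exact hb. Qed.

Lemma mem' P v (h : W v) : proj1_sig P (exist _ v h) -> B (rep P) v.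
Proof. rewrite rep_eq. auto. Qed.

Lemma same_block P Q v : W v -> B (rep P) v -> B (rep Q) v -> P = Q.
Proof.
  intros hv h1 h2. apply (@qv_share _ _ r1_partition P Q (exist _ v hv)); apply mem; auto.
Qed.

Lemma r1_key (X : quot_vertex F1 -> Prop) :
  partitive (quot_edge (induced_edge E W) F1) X ->
  forall P1 P2, X P1 -> X P2 -> P1 <> P2 -> forall R0, X R0.
Proof.
  intros hX P1 P2 x1 x2 n12 R0. apply NNPP; intro nR.
  set (U := fun v => exists Q, X Q /\ B (rep Q) v).
  assert (mU : modV E W U).
  { intros a b c ha hb hc [Q1 [q1 h1]] [Q2 [q2 h2]] nc.
    pose (Rc := exist F1 (sub (B c)) (ex_intro _ c (conj hc eq_refl)) : quot_vertex F1).
    assert (cR : B (rep Rc) c).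
    { apply (mem' Rc hc). simpl. apply B_self. }
    assert (nXR : ~ X Rc) by (intro h; apply nc; exists Rc; auto).
    assert (n1 : Q1 <> Rc) by (intro e; subst; auto).
    assert (n2 : Q2 <> Rc) by (intro e; subst; auto).
    pose proof (@QE _ _ _ r1_partition r1_part_all Q1 Rc _ _ n1 (mem Q1 ha h1) (mem Rc hc cR)) as e1.
    pose proof (@QE _ _ _ r1_partition r1_part_all Q2 Rc _ _ n2 (mem Q2 hb h2) (mem Rc hc cR)) as e2.
    destruct (hX Q1 Q2 Rc q1 q2 nXR) as [e3 _].
    unfold induced_edge in e1, e2; simpl in e1, e2. tauto. }
  assert (fU : free U).
  { intros a b ha hb M. pose proof (allin mU M ha hb (rep_W R0)) as [Q [q h]].
    apply nR. rewrite <- (@same_block Q R0 (rep R0) (rep_W R0) h (B_self (rep R0))). exact q. }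
  assert (u1 : U (rep P1)) by (exists P1; split; auto; apply B_self).
  assert (u2 : U (rep P2)) by (exists P2; split; auto; apply B_self).
  pose proof (B_max mU fU u1 (rep P2) u2) as h.
  apply n12. exact (@same_block P1 P2 (rep P2) (rep_W P2) h (B_self (rep P2))).
Qed.

Lemma r1_indec : indecomposable (quot_edge (induced_edge E W) F1).
Proof.
  intros X hX.
  destruct (classic (exists P, X P)) as [[P1 x1]|n]; [|left; intros w h; apply n; eauto].
  right. destruct (classic (exists P2, X P2 /\ P2 <> P1)) as [[P2 [x2 n2]]|n].
  - right. intro w. exact (r1_key hX x1 x2 (fun e => n2 (eq_sym e)) w).
  - left. exists P1. intro y. split.
    + intro h. apply NNPP; intro ne. apply n; eauto.
    + intro e; subst; auto.
Qed.

Lemma r1_sub :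
  exists (V' : V -> Prop) (E' : V -> V -> Prop),
    (forall v, V' v -> W v) /\
    (forall x y, E' x y -> V' x /\ V' y /\ E x y) /\
    (forall x y, E' x y -> multiplex E VS (x, y)) /\
    graph_iso (quot_edge (induced_edge E W) F1)
              (fun x y : induced_vertex V' => E' (proj1_sig x) (proj1_sig y)).
Proof.
  set (V' := fun v => exists P, rep P = v).
  set (E' := fun x y => V' x /\ V' y /\ E x y).
  exists V', E'. split; [|split; [|split]].
  - intros v [P <-]. apply rep_W.
  - intros x y h; exact h.
  - intros x y [[P <-] [[Q <-] h]].
    apply (multiplex_iff Hsym HS). apply cross; auto using rep_W.
    intro hb. apply (Hirr (a := rep P)).
    assert (e : P = Q).
    { apply (@same_block P Q (rep Q) (rep_W Q) hb (B_self (rep Q))). }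
    subst; auto.
  - assert (gch : forall v : induced_vertex V', {P | rep P = proj1_sig v}).
    { intro v. apply constructive_indefinite_description. exact (proj2_sig v). }
    pose (f := fun P => exist V' (rep P) (ex_intro _ P eq_refl)).
    pose (g := fun v => proj1_sig (gch v)).
    exists f, g. split; [|split].
    + intro P. unfold g. destruct (gch (f P)) as [P' e]; simpl in *.
      apply (@same_block P' P (rep P) (rep_W P)); [rewrite <- e|]; apply B_self.
    + intro v. unfold g. destruct (gch v) as [P e]. destruct v as [v hv]; simpl in *.
      unfold f. subst v. f_equal. apply proof_irrelevance.
    + intros P Q. unfold f; simpl. unfold E'.
      destruct (classic (P = Q)) as [e|n].
      * subst. split; [intros [h _]; congruence|intros [_ [_ h]]; exfalso; exact (Hirr h)].
      * rewrite <- (@QE _ _ _ r1_partition r1_part_all P Q _ _ n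
                      (mem P (rep_W P) (B_self _)) (mem Q (rep_W Q) (B_self _))).
        unfold induced_edge; simpl.
        split; [intro h; split; [exists P|split; [exists Q|]]; auto|tauto].
Qed.

End R1.


Theorem theorem4p4 (V : Type) (E : V -> V -> Prop)
  (Hirr : forall a, ~ E a a) (Hsym : forall a b, E a b -> E b a)
  (VS : list V) (r : nat) (HS : simplex E VS r) :
  exists F : (induced_vertex (spanned (multiplex E VS)) -> Prop) -> Prop,
    (* (i) *)
    is_partition F /\
    (forall X, F X -> max_strong_partitive (induced_edge E (spanned (multiplex E VS))) X) /\
    ~ ((exists X, F X /\ forall w, X w) /\ (forall X, F X -> forall w, X w)) /\
    (* (ii) *)
    (r = 1 ->
       graph_iso (quot_edge (induced_edge E (spanned (multiplex E VS))) F)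
                 (induced_edge E (fun v => In v VS))
       \/
       (indecomposable (quot_edge (induced_edge E (spanned (multiplex E VS))) F) /\
        exists (V' : V -> Prop) (E' : V -> V -> Prop),
          (forall v, V' v -> spanned (multiplex E VS) v) /\
          (forall x y, E' x y -> V' x /\ V' y /\ E x y) /\
          (forall x y, E' x y -> multiplex E VS (x, y)) /\
          graph_iso (quot_edge (induced_edge E (spanned (multiplex E VS))) F)
                    (fun x y : induced_vertex V' => E' (proj1_sig x) (proj1_sig y)))) /\
    (* (iii) *)
    (2 <= r ->
       graph_iso (quot_edge (induced_edge E (spanned (multiplex E VS))) F)
                 (induced_edge E (fun v => In v VS))).
Proof.
  pose proof HS as HS'. destruct HS' as [h1 [hnd [hl _]]].
  destruct (Nat.eq_dec r 1) as [e1|ne1].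
  - assert (two : exists s0 s1, VS = (s0 :: s1 :: nil)%list /\ s0 <> s1).
    { destruct (VS_two HS) as [x [y [l [eV n]]]]. subst VS r. simpl in hl.
      destruct l; simpl in hl; try lia. exists x, y; auto. }
    destruct two as [s0 [s1 [HV n01]]].
    exists (@F1 V E VS).
    split; [exact (r1_partition Hirr Hsym HS HV)|].
    split; [intros X hX; exact (r1_maxstrong Hirr Hsym HS HV n01 hX)|].
    split; [exact (r1_notall Hirr Hsym HS HV n01)|].
    split; [|intro; lia].
    intros _. right. split.
    + exact (r1_indec Hirr Hsym HS HV n01).
    + exact (r1_sub Hirr Hsym HS HV n01).
  - assert (Hr : 2 <= r) by lia.
    exists (@Fr2 V E VS).
    split; [exact (r2_partition Hsym HS Hr)|].
    split; [intros X hX; exact (r2_maxstrong Hsym HS Hr hX)|].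
    split; [exact (r2_notall Hsym HS Hr)|].
    split; [intro; lia|].
    intros _. exact (r2_iso Hirr Hsym HS Hr).
Qed.
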